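(* Fix $k\ge1$. For every $k$-bounded partition $\lambda$, the image of the dual $k$-Schur function $\mathfrak{S}^{(k)}_\lambda$ in $\mathsf{QSym}^{(k)}$ satisfies $$\mathfrak{S}^{(k)}_\lambda=\sum_{\substack{\alpha\ k\text{-bounded}\\ \lambda(\alpha)=\lambda}}\mathcal{S}^{(k)}_\alpha .$$
   Context: Compositions are finite sequences of positive integers (possibly empty $\emptyset$); $k$-bounded means all parts $\le k$; $\lambda(\alpha)$ is the partition obtained by sorting the parts of $\alpha$. $\mathsf{Sym}^{(k)}$ is the quotient of the ring of symmetric functions $\mathsf{Sym}$ by the ideal generated by the monomial symmetric functions $m_\mu$ with $\mu$ not $k$-bounded; $\mathsf{Sym}_{(k)}=\mathbb{Q}[h_1,\dots,h_k]$; they are paired by $\langle m_\lambda,h_\mu\rangle=\delta_{\lambda,\mu}$ ($\lambda,\mu$ $k$-bounded). $\mathsf{QSym}^{(k)}$ is the quotient of $\mathsf{QSym}$ by the ideal generated by monomial quasi-symmetric functions $M_\alpha$ with some part $>k$; $\mathsf{NSym}_{(k)}$ is the subalgebra of $\mathbb{Q}\langle H_1,H_2,\dots\rangle$ generated by $H_1,\dots,H_k$; they are paired by $\langle M_\alpha,H_\beta\rangle=\delta_{\alpha,\beta}$. The inclusion $\mathsf{Sym}\subset\mathsf{QSym}$ ($m_\mu=\sum_{\lambda(\alpha)=\mu}M_\alpha$) induces a map $\mathsf{Sym}^{(k)}\to\mathsf{QSym}^{(k)}$. $k$-conjugation: hook length of cell $(i,j)$ of $\kappa$ is $\kappa_i-j+\kappa'_j-i+1$;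 a $(k+1)$-core has no cell of hook length $k+1$; $p(\kappa)$ has $i$-th part the number of cells in row $i$ with hook length $\le k$; $p$ is a bijection from $(k+1)$-cores to $k$-bounded partitions with inverse $c$; $\lambda^{\omega_k}=p(c(\lambda)')$. For $k$-bounded $\mu\subseteq\lambda$, $\lambda/\mu$ is a horizontal $k$-strip if no two of its cells share a column, and $\mu^{\omega_k}\subseteq\lambda^{\omega_k}$ with no two cells of $\lambda^{\omega_k}/\mu^{\omega_k}$ in the same row. The $k$-Schur functions $\{s^{(k)}_\lambda\}$ are the basis of $\mathsf{Sym}_{(k)}$ with $s^{(k)}_\emptyset=1$ and $h_i s^{(k)}_\lambda=\sum_\mu s^{(k)}_\mu$ ($1\le i\le k$) over $\mu$ with $\mu/\lambda$ a horizontal $k$-strip of size $i$; the dual $k$-Schur functions $\{\mathfrak{S}^{(k)}_\lambda\}$ form the dual basis of $\mathsf{Sym}^{(k)}$. Box-adding operators: $t_1(\alpha)=[1,\alpha_1,\dots,\alpha_m]$; for $i\ge2$, $t_i(\alpha)$ replaces the leftmost part equal to $i-1$ by $i$ (undefined if none). $\beta//\alpha$ is a horizontal composition strip of size $n$ if $\beta=t_{i_n}\cdots t_{i_1}(\alpha)$ with $1\le i_1<\cdots<i_n$; for $k$-bounded $\alpha,\beta$ it is a horizontal $k$-composition strip if moreover $\lambda(\beta)/\lambda(\alpha)$ is a horizontal $k$-strip. $\{\mathbf{S}^{(k)}_\alpha\}$ is the unique basis of $\mathsf{NSym}_{(k)}$ with $\mathbf{S}^{(k)}_\emptyset=1$ and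 $H_i\mathbf{S}^{(k)}_\alpha=\sum_\beta\mathbf{S}^{(k)}_\beta$ ($1\le i\le k$) over $\beta$ with $\beta//\alpha$ a horizontal $k$-composition strip of size $i$; the quasi-symmetric affine Schur functions $\{\mathcal{S}^{(k)}_\alpha\}$ form the dual basis of $\mathsf{QSym}^{(k)}$. *)

(* Defs.v *)
From HB Require Import structures.
From mathcomp Require Import all_boot all_order all_algebra.
From mathcomp Require Import finmap.
From Stdlib Require Import ClassicalEpsilon.

Set Implicit Arguments.
Unset Strict Implicit.
Unset Printing Implicit Defensive.

Import GRing.Theory.

Definition pb (P : Prop) : bool :=
  if excluded_middle_informative P then true else false.

Definition is_comp (a : seq nat) : bool := all (fun x => 0 < x) a.
Definition kbounded (k : nat) (a : seq nat) : bool := all (fun x => x <= k) a.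
Definition is_part (l : seq nat) : bool := is_comp l && sorted geq l.
Definition kcomp (k : nat) (a : seq nat) : bool := is_comp a && kbounded k a.
Definition kpart (k : nat) (l : seq nat) : bool := is_part l && kbounded k l.

Definition lam_of (a : seq nat) : seq nat := sort geq a.

Fixpoint kcomps_fuel (k fuel n : nat) : seq (seq nat) :=
  if n == 0 then [:: [::]] else
  match fuel with
  | 0 => [::]
  | fuel'.+1 =>
      flatten [seq [seq i :: c | c <- kcomps_fuel k fuel' (n - i)]
              | i <- iota 1 (minn k n)]
  end.
Definition kcomps (k n : nat) : seq (seq nat) := kcomps_fuel k n n.
Definition kparts (k n : nat) : seq (seq nat) := [seq l <- kcomps k n | is_part l].

(* Cores and k-conjugation.  Rows/columns are 0-indexed below.               *)
Definition conjp (l : seq nat) : seq nat :=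
  [seq count (fun x => j < x) l | j <- iota 0 (head 0 l)].

(* hook length of cell (i,j) (0-indexed): kappa_i + kappa'_j - i - j - 1,
   i.e. kappa_i - j + kappa'_j - i + 1 in 1-indexed coordinates. *)
Definition hook (kap : seq nat) (i j : nat) : nat :=
  nth 0 kap i + nth 0 (conjp kap) j - i - j - 1.

Definition is_core (r : nat) (kap : seq nat) : bool :=
  is_part kap &&
  all (fun i => all (fun j => hook kap i j != r) (iota 0 (nth 0 kap i)))
      (iota 0 (size kap)).

Definition pk (k : nat) (kap : seq nat) : seq nat :=
  [seq count (fun j => hook kap i j <= k) (iota 0 (nth 0 kap i))
  | i <- iota 0 (size kap)].

(* kconj k l m  <->  m = l^{omega_k} = p(c(l)'), where c(l) is the (unique)
   (k+1)-core kap with p(kap) = l. *)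
Definition kconj (k : nat) (l m : seq nat) : Prop :=
  exists kap, is_core k.+1 kap /\ pk k kap = l /\ m = pk k (conjp kap).

(* l/m is a horizontal strip (m contained in l, no two cells in a column). *)
Definition hstrip (m l : seq nat) : Prop :=
  forall i, nth 0 m i <= nth 0 l i /\ nth 0 l i.+1 <= nth 0 m i.
(* l/m is a vertical strip (m contained in l, no two cells in a row). *)
Definition vstrip (m l : seq nat) : Prop :=
  forall i, nth 0 m i <= nth 0 l i <= (nth 0 m i).+1.

Definition hkstrip (k : nat) (m l : seq nat) : Prop :=
  [/\ kpart k m, kpart k l, hstrip m l &
      exists mw lw, [/\ kconj k m mw, kconj k l lw & vstrip mw lw]].

Fixpoint bump_first (v : nat) (a : seq nat) : option (seq nat) :=
  match a with
  | [::] => None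
  | x :: a' => if x == v then Some (v.+1 :: a')
               else omap (cons x) (bump_first v a')
  end.
Definition tbox (i : nat) (a : seq nat) : option (seq nat) :=
  match i with
  | 0 => None
  | 1 => Some (1 :: a)
  | i'.+1 => bump_first i' a
  end.
Fixpoint apply_tboxes (ix : seq nat) (a : seq nat) : option (seq nat) :=
  match ix with
  | [::] => Some a
  | i :: ix' => obind (apply_tboxes ix') (tbox i a)
  end.

Definition comp_strip (b a : seq nat) (n : nat) : Prop :=
  exists ix : seq nat, [/\ size ix = n, all (fun i => 0 < i) ix,
                           sorted ltn ix & apply_tboxes ix a = Some b].

Definition hkcomp_strip (k : nat) (b a : seq nat) (n : nat) : Prop :=
  [/\ kcomp k a, kcomp k b, comp_strip b a n & hkstrip k (lam_of a) (lam_of b)].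

(* Linear algebra: an element of each of Sym_(k), Sym^(k), NSym_(k),
   QSym^(k) is stored as its finitely supported coefficient function
   (on the bases h_mu, m_mu, H_beta, M_alpha respectively).                  *)
Definition Elt := {fsfun seq nat -> rat with 0%R}.

Local Open Scope ring_scope.

Definition supp_in (dom : pred (seq nat)) (f : Elt) : Prop :=
  forall x, x \in finsupp f -> dom x.

(* the unit element 1 = h_empty = H_empty *)
Definition is_one (f : Elt) : Prop := forall x, f x = (x == [::])%:R.

(* multiplication by h_i in Sym_(k) = Q[h_1..h_k] (h-basis coefficients):
   h_i h_mu = h_{mu cup i}. *)
Definition mulh (i : nat) (f : Elt) (nu : seq nat) : rat :=
  if i \in nu then f (rem i nu) else 0.
(* left multiplication by H_i in NSym_(k) (H-basis coefficients):
   H_i H_beta = H_{[i, beta]}. *)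
Definition mulH (i : nat) (f : Elt) (b : seq nat) : rat :=
  if b is j :: b' then (if j == i then f b' else 0) else 0.

Definition is_basis (dom : pred (seq nat)) (B : seq nat -> Elt) : Prop :=
  (forall x, dom x -> supp_in dom (B x)) /\
  (forall v : Elt, supp_in dom v ->
     exists! c : Elt, supp_in dom c /\
       forall z, v z = \sum_(x <- finsupp c) c x * B x z).

Definition is_kSchur (k : nat) (s : seq nat -> Elt) : Prop :=
  [/\ is_basis (kpart k) s, is_one (s [::]) &
      forall l i, kpart k l -> (0 < i <= k)%N -> forall nu, kpart k nu ->
        mulh i (s l) nu =
        \sum_(m <- kparts k (sumn l + i)%N | pb (hkstrip k l m)) s m nu].

(* pairing Sym^(k) x Sym_(k): <m_l, h_m> = delta *)
Definition pairS (k : nat) (F G : Elt) : rat :=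
  \sum_(x <- finsupp G | kpart k x) F x * G x.

Definition is_dual_kSchur (k : nat) (s D : seq nat -> Elt) : Prop :=
  (forall l, kpart k l -> supp_in is_part (D l)) /\
  (forall l m, kpart k l -> kpart k m -> pairS k (D l) (s m) = (l == m)%:R).

Definition is_ncSchur (k : nat) (S : seq nat -> Elt) : Prop :=
  [/\ is_basis (kcomp k) S, is_one (S [::]) &
      forall a i, kcomp k a -> (0 < i <= k)%N -> forall b, kcomp k b ->
        mulH i (S a) b =
        \sum_(c <- kcomps k (sumn a + i)%N | pb (hkcomp_strip k c a i)) S c b].

(* pairing QSym^(k) x NSym_(k): <M_a, H_b> = delta *)
Definition pairQ (k : nat) (F G : Elt) : rat :=
  \sum_(x <- finsupp G | kcomp k x) F x * G x.

Definition is_qaSchur (k : nat) (S Q : seq nat -> Elt) : Prop :=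
  (forall a, kcomp k a -> supp_in is_comp (Q a)) /\
  (forall a b, kcomp k a -> kcomp k b -> pairQ k (Q a) (S b) = (a == b)%:R).

(* the map Sym^(k) -> QSym^(k) induced by m_mu = sum_{lambda(a)=mu} M_a,
   on M-basis coefficients. *)
Definition toQSym (F : Elt) (a : seq nat) : rat :=
  if is_comp a then F (lam_of a) else 0.

(* equality in QSym^(k) (M_a with a part > k vanish) *)
Definition qeq (k : nat) (f g : seq nat -> rat) : Prop :=
  forall a, kcomp k a -> f a = g a.

(* Main.v *)
Require Import Defs.
From mathcomp Require Import all_boot all_order all_algebra.
From mathcomp Require Import finmap.
From mathcomp Require Import zify.
From Stdlib Require Import ClassicalEpsilon.

Set Implicit Arguments.
Unset Strict Implicit.
Unset Printing Implicit Defensive.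
Import GRing.Theory.

Definition cnt (j : nat) (a : seq nat) : nat := count (fun y => j <= y) a.

Lemma bump_cnt v a a' : bump_first v a = Some a' ->
  forall j, cnt j a' = cnt j a + (j == v.+1).
Proof.
elim: a a' => [|x a IH] a' //=.
case: eqP => [-> [<-] j|_].
  rewrite /cnt /= -/(cnt j a) addnAC; congr (_ + _).
  case: (ltngtP j v.+1) => [lt|gt|->]; rewrite ?ltnn ?leqnn /=.
  - by rewrite -ltnS lt.
  - by rewrite leqNgt (ltn_trans (ltnSn v) gt).
  - by [].
case E: (bump_first v a) => [b|] //= [<-] j.
by rewrite /cnt /= -/(cnt j b) -/(cnt j a) IH // addnA.
Qed.

Lemma bump_sumn v a a' : bump_first v a = Some a' -> sumn a' = (sumn a).+1.
Proof.
elim: a a' => [|x a IH] a' //=.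
case: eqP => [-> [<-]|_] /=; first by rewrite addSn.
case E: (bump_first v a) => [b|] //= [<-] /=; by rewrite (IH b) ?addnS.
Qed.

Lemma bump_comp v a a' : bump_first v a = Some a' -> is_comp a -> is_comp a'.
Proof.
elim: a a' => [|x a IH] a' //=.
case: eqP => [-> [<-]|_] /=; first by move=> /andP[].
case E: (bump_first v a) => [b|] //= [<-] /andP[hx H]; rewrite /is_comp /= hx; exact: IH.
Qed.

Lemma bump_ex v a : v \in a -> exists a', bump_first v a = Some a'.
Proof.
elim: a => [|x a IH] //=; rewrite in_cons.
case: (eqVneq x v) => [E|ne] /=; first by eauto.
by move=> /IH [b ->] /=; eauto.
Qed.

Lemma tbox_cnt j a a' : tbox j a = Some a' ->
  forall j', 0 < j' -> cnt j' a' = cnt j' a + (j' == j).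
Proof.
case: j => [|[|v]] //=.
  by case=> <- j' hj; rewrite /cnt /= -/(cnt j' a) addnC; case: j' hj => [|[|]].
by move=> /bump_cnt H j' _; rewrite H.
Qed.

Lemma tbox_sumn j a a' : tbox j a = Some a' -> sumn a' = (sumn a).+1.
Proof. case: j => [|[|v]] //=; [by case=> <- | exact: bump_sumn]. Qed.

Lemma tbox_comp j a a' : tbox j a = Some a' -> is_comp a -> is_comp a'.
Proof. case: j => [|[|v]] //=; [by case=> <- | exact: bump_comp]. Qed.

Lemma apply_cnt ix a a' : apply_tboxes ix a = Some a' ->
  forall j, 0 < j -> cnt j a' = cnt j a + count_mem j ix.
Proof.
elim: ix a => [|i ix IH] a /=; first by case=> -> j; rewrite addn0.
case E: (tbox i a) => [b|] //= H j hj.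
by rewrite (IH _ H j hj) (tbox_cnt E hj) eq_sym addnA.
Qed.

Lemma apply_sumn ix a a' : apply_tboxes ix a = Some a' -> sumn a' = sumn a + size ix.
Proof.
elim: ix a => [|i ix IH] a /=; first by case=> ->; rewrite addn0.
case E: (tbox i a) => [b|] //= H.
by rewrite (IH _ H) (tbox_sumn E) addnS addSn.
Qed.

Lemma apply_comp ix a a' : apply_tboxes ix a = Some a' -> is_comp a -> is_comp a'.
Proof.
elim: ix a => [|i ix IH] a /=; first by case=> ->.
case E: (tbox i a) => [b|] //= H ha; exact: (IH _ H (tbox_comp E ha)).
Qed.

Lemma count_pred1_cnt v s : count_mem v s = cnt v s - cnt v.+1 s.
Proof.
elim: s => [|x s IH] //=; rewrite /cnt /= -!/(cnt _ s) IH.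
have le : cnt v.+1 s <= cnt v s by apply: sub_count => y /= /ltnW.
case: (ltngtP v x) => [lt|gt|E].
- by rewrite !add1n subSS.
- by [].
- by rewrite /= add1n add0n subSn.
Qed.

Lemma perm_cnt s1 s2 : is_comp s1 -> is_comp s2 ->
  (forall j, 0 < j -> cnt j s1 = cnt j s2) -> perm_eq s1 s2.
Proof.
move=> h1 h2 H; rewrite /perm_eq; apply/allP => v _ /=; apply/eqP.
case: v => [|v].
  rewrite !(count_pred1_cnt 0).
  have E : forall s, is_comp s -> cnt 0 s = cnt 1 s.
    move=> s /allP hs; apply: eq_in_count => y /hs; by case: y.
  by rewrite !E // !subnn.
by rewrite !count_pred1_cnt !H.
Qed.

Lemma geq_tr : transitive geq.
Proof. by move=> y x z h1 h2; exact: leq_trans h2 h1. Qed.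

Lemma cnt_sorted s j i : sorted geq s -> 0 < j -> (j <= nth 0 s i) = (i < cnt j s).
Proof.
elim: s i => [|x s IH] i /=; first by rewrite nth_nil; case: j.
move=> hs hj.
have hs' : sorted geq s := path_sorted hs.
have hall : all (fun y => y <= x) s := order_path_min geq_tr hs.
rewrite /cnt /= -/(cnt j s).
case: (leqP j x) => hx /=.
  case: i => [|i] /=; first by rewrite hx.
  by rewrite IH // add1n ltnS.
have c0 : cnt j s = 0.
  apply/eqP; rewrite -leqn0 leqNgt -has_count; apply/hasPn => y /(allP hall) hy.
  by rewrite -ltnNge (leq_ltn_trans hy hx).
rewrite c0; case: i => [|i] /=; first by rewrite leqNgt hx.
by rewrite IH // c0.
Qed.

Lemma hstrip_cnt m l : sorted geq m -> sorted geq l -> hstrip m l ->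
  forall j, 0 < j -> cnt j m <= cnt j l <= (cnt j m).+1.
Proof.
move=> hm hl H j hj; apply/andP; split.
  case E: (cnt j m) => [|c] //.
  have : c < cnt j m by rewrite E.
  rewrite -cnt_sorted // => h1.
  have h2 := leq_trans h1 (proj1 (H c)).
  by move: h2; rewrite cnt_sorted.
case E: (cnt j l) => [|[|c]] //.
have : c.+1 < cnt j l by rewrite E.
rewrite -cnt_sorted // => h1.
have h2 := leq_trans h1 (proj2 (H c)).
by move: h2; rewrite cnt_sorted.
Qed.

Lemma cnt_big s j : sumn s < j -> cnt j s = 0.
Proof.
elim: s => [|x s IH] //= h; rewrite /cnt /= -/(cnt j s) IH.
  by rewrite leqNgt (leq_ltn_trans (leq_addr _ _) h).
exact: leq_ltn_trans (leq_addl _ _) h.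
Qed.

Lemma cnt_anti j1 j2 s : j1 <= j2 -> cnt j2 s <= cnt j1 s.
Proof. move=> h; apply: sub_count => y /= hy; exact: leq_trans h hy. Qed.

Lemma build x l : forall n j0 y, 0 < j0 ->
  (forall j, 0 < j -> j < j0 -> cnt j y = cnt j l) ->
  (forall j, j0 <= j -> cnt j y = cnt j x) ->
  (forall j, j0 <= j -> cnt j x <= cnt j l <= (cnt j x).+1) ->
  (forall j, j0 + n <= j -> cnt j x = cnt j l) ->
  exists y', apply_tboxes [seq j <- iota j0 n | cnt j l != cnt j x] y = Some y'
     /\ forall j, 0 < j -> cnt j y' = cnt j l.
Proof.
elim=> [|n IH] j0 y hj0 hlow hmid hstr hend.
  exists y; split => // j hj; case: (ltnP j j0) => hjj; first exact: hlow.
  by rewrite hmid // hend // addn0.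
rewrite /=.
have hend' : forall j, j0.+1 + n <= j -> cnt j x = cnt j l.
  by move=> j hj; apply: hend; rewrite addnS -addSn.
have [hx1 hx2] := andP (hstr j0 (leqnn _)).
case: eqP => Ej0 /=.
  apply: IH => //.
  - move=> j hj; rewrite ltnS leq_eqVlt => /orP[/eqP ->|]; last exact: hlow.
    by rewrite hmid.
  - by move=> j hj; apply: hmid; exact: ltnW.
  - by move=> j hj; apply: hstr; exact: ltnW.
have Ecnt : cnt j0 l = (cnt j0 x).+1.
  by apply/eqP; rewrite eqn_leq hx2 ltn_neqAle eq_sym hx1 andbT; apply/eqP.
have [y1 Hy1] : exists y1, tbox j0 y = Some y1.
  case: j0 hj0 hlow hmid hstr hend hend' hx1 hx2 Ej0 Ecnt => [|[|v]] //= _ hlow hmid _ _ _ _ _ _ Ecnt.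
    by eauto.
  apply: bump_ex; rewrite -has_pred1 has_count count_pred1_cnt.
  rewrite hlow // hmid // subn_gt0 -Ecnt.
  exact: cnt_anti (leqnSn _).
rewrite Hy1 /=.
apply: IH => //.
- move=> j hj; rewrite ltnS leq_eqVlt => /orP[/eqP ->|] => [|hjj].
    by rewrite (tbox_cnt Hy1) // eqxx hmid // addn1.
  by rewrite (tbox_cnt Hy1) // hlow // (_ : (j == j0) = false) ?addn0 //; apply/negbTE; rewrite neq_ltn hjj.
- move=> j hj; rewrite (tbox_cnt Hy1) ?(leq_trans _ hj) // hmid ?(ltnW hj) //.
  by rewrite (_ : (j == j0) = false) ?addn0 //; apply/negbTE; rewrite neq_ltn hj orbT.
- by move=> j hj; apply: hstr; exact: ltnW.
Qed.

Lemma geq_total : total geq.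
Proof. by move=> a b; rewrite /= orbC leq_total. Qed.

Lemma perm_cnt_eq s1 s2 : perm_eq s1 s2 -> forall j, cnt j s1 = cnt j s2.
Proof. by move/permP => H j; exact: H. Qed.

Lemma lam_sorted a : sorted geq (lam_of a).
Proof. exact: sort_sorted geq_total a. Qed.

Lemma lam_perm a : perm_eq (lam_of a) a.
Proof. by rewrite /lam_of perm_sort. Qed.

Lemma strip_exists x l : is_comp x -> is_part l -> hstrip (lam_of x) l ->
  exists ix c, [/\ all (fun i => 0 < i) ix, sorted ltn ix,
                 apply_tboxes ix x = Some c & perm_eq c l].
Proof.
move=> hx /andP[hl1 hl2] hs.
have Ec := perm_cnt_eq (lam_perm x).
have [] := @build x l (sumn x + sumn l) 1 x (ltnSn 0).
- by move=> j hj; rewrite ltnNge hj.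
- by [].
- move=> j hj; rewrite -Ec; exact: hstrip_cnt (lam_sorted x) hl2 hs j hj.
- move=> j hj; rewrite !cnt_big //.
    apply: leq_trans hj; rewrite add1n ltnS; exact: leq_addl.
  apply: leq_trans hj; rewrite add1n ltnS; exact: leq_addr.
move=> c [Hc Hcnt].
exists [seq j <- iota 1 (sumn x + sumn l) | cnt j l != cnt j x], c; split => //.
- apply/allP => j; rewrite mem_filter mem_iota => /andP[_ /andP[]] //.
- apply: sorted_filter; [exact: ltn_trans | exact: iota_ltn_sorted].
- apply: perm_cnt => //; exact: apply_comp Hc hx.
Qed.

Lemma strip_unique x ix ix' c c' :
  is_comp x -> all (fun i => 0 < i) ix -> all (fun i => 0 < i) ix' ->
  sorted ltn ix -> sorted ltn ix' ->
  apply_tboxes ix x = Some c -> apply_tboxes ix' x = Some c' ->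
  perm_eq c c' -> c = c'.
Proof.
move=> hx p p' so so' H H' pc.
suff E : ix = ix' by move: H; rewrite E H' => -[].
apply: (irr_sorted_eq ltn_trans ltnn) => // j.
have C : count_mem j ix = count_mem j ix'.
  case: j => [|j].
    rewrite !(@eq_in_count _ _ pred0) ?count_pred0 //.
      by move=> y /(allP p') /=; case: y.
    by move=> y /(allP p) /=; case: y.
  have := perm_cnt_eq pc j.+1.
  by rewrite (apply_cnt H) // (apply_cnt H') // => /eqP; rewrite eqn_add2l => /eqP.
by rewrite -!has_pred1 !has_count C.
Qed.

Lemma uniq_flat_heads (s : seq nat) (L : nat -> seq (seq nat)) :
  uniq s -> (forall i, uniq (L i)) ->
  uniq (flatten [seq [seq i :: c | c <- L i] | i <- s]).
Proof.
elim: s => [|i s IH] //= /andP[his us] uL.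
rewrite cat_uniq IH // andbT map_inj_uniq ?uL //=; last by move=> ? ? [].
apply/hasPn => z /flattenP [t /mapP [j hj ->] /mapP [c _ ->]].
apply/mapP => -[c' _ [E _]]; by move: his; rewrite -E hj.
Qed.

Lemma comp_sumn_pos a : is_comp a -> a != [::] -> 0 < sumn a.
Proof. by case: a => [|y a] //= /andP[hy _] _; rewrite addn_gt0 hy. Qed.

Lemma mem_kcomps_fuel k fuel : forall n x, n <= fuel ->
  (x \in kcomps_fuel k fuel n) = (kcomp k x && (sumn x == n)).
Proof.
elim: fuel => [|f IH] n x hn /=.
  have -> : n = 0 by lia.
  rewrite inE; case: x => [|y x] //=.
  by rewrite /kcomp /= -andbA; case: (posnP y) => //= hy; rewrite addn_eq0 eqn0Ngt hy /= ?andbF.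
case: eqP => [->|/eqP nn0].
  rewrite inE; case: x => [|y x] //=.
  by rewrite /kcomp /= -andbA; case: (posnP y) => //= hy; rewrite addn_eq0 eqn0Ngt hy /= ?andbF.
apply/flattenP/idP.
  move=> [t /mapP [i hi ->] /mapP [c hc ->]].
  move: hi; rewrite mem_iota => /andP[hi1 hi2].
  move: hc; rewrite IH; last by lia.
  rewrite /kcomp /is_comp /kbounded /= => /andP[/andP[h1 h2] /eqP h3].
  rewrite h1 h2 hi1 /= andbT; apply/andP; split; first lia.
  apply/eqP; lia.
case: x => [|y c]; first by rewrite andbC /= eq_sym (negbTE nn0).
rewrite /kcomp /is_comp /kbounded /= => /andP[/andP[/andP[hy hc] /andP[hyk hck]] /eqP hs].
exists [seq y :: c0 | c0 <- kcomps_fuel k f (n - y)].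
  apply/mapP; exists y => //; rewrite mem_iota; apply/andP; split => //; lia.
apply/mapP; exists c => //; rewrite IH; last by lia.
rewrite /kcomp /is_comp /kbounded hc hck /=; apply/eqP; lia.
Qed.

Lemma uniq_kcomps_fuel k fuel n : uniq (kcomps_fuel k fuel n).
Proof.
elim: fuel n => [|f IH] n /=; first by case: (n == 0).
case: (n == 0) => //; apply: uniq_flat_heads => //; exact: iota_uniq.
Qed.

Lemma mem_kcomps k n x : (x \in kcomps k n) = (kcomp k x && (sumn x == n)).
Proof. exact: mem_kcomps_fuel. Qed.

Lemma uniq_kcomps k n : uniq (kcomps k n).
Proof. exact: uniq_kcomps_fuel. Qed.

Lemma mem_kparts k n x : (x \in kparts k n) = (kpart k x && (sumn x == n)).
Proof.
rewrite mem_filter mem_kcomps /kpart /kcomp /is_part.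
by case: (is_comp x); case: (sorted geq x); case: (kbounded k x).
Qed.

Lemma uniq_kparts k n : uniq (kparts k n).
Proof. exact/filter_uniq/uniq_kcomps. Qed.

Local Open Scope ring_scope.

Lemma pbP (P : Prop) : reflect P (pb P).
Proof. by rewrite /pb; case: excluded_middle_informative => h; constructor. Qed.

Lemma geq_anti : antisymmetric geq.
Proof. by move=> a b /andP[h1 h2]; apply/eqP; rewrite eqn_leq; apply/andP; split. Qed.

Lemma sum_eq1 (r : seq (seq nat)) c0 : uniq r ->
  \sum_(c <- r) ((c == c0)%:R : rat) = (c0 \in r)%:R.
Proof.
elim: r => [|x r IH] /=; first by rewrite big_nil.
move=> /andP[hx ur]; rewrite big_cons IH // in_cons.
case: (eqVneq x c0) => [E|ne] /=.
  by rewrite -E (negbTE hx) /= addr0.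
by rewrite add0r.
Qed.

Lemma lam_part_eq c l : is_part l -> perm_eq c l -> lam_of c = l.
Proof.
move=> /andP[_ hl] p; apply: (sorted_eq geq_tr geq_anti) => //; first exact: lam_sorted.
by rewrite (perm_trans (lam_perm c) p).
Qed.

Lemma strip_count k x l i : kcomp k x -> kpart k l ->
  \sum_(c <- kcomps k (sumn x + i) | pb (hkcomp_strip k c x i)) ((lam_of c == l)%:R : rat)
  = (pb (hkstrip k (lam_of x) l) && (sumn l == sumn x + i)%N)%:R.
Proof.
move=> hx hl.
rewrite big_mkcond /=.
rewrite (eq_bigr (fun c => ((pb (hkcomp_strip k c x i) && (lam_of c == l))%:R : rat))); last by move=> c _; case: (pb _).
case: (pbP (hkstrip k (lam_of x) l)) => hk /=; last first.
  rewrite big1_seq // => c _; case: (pbP (hkcomp_strip k c x i)) => //= -[_ _ _ h].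
  by case: eqP => // E; move: h; rewrite E.
case: (eqVneq (sumn l) (sumn x + i)%N) => hs /=; last first.
  rewrite big1_seq // => c /andP[_]; rewrite mem_kcomps => /andP[_ /eqP hc].
  case: eqP => [E|] /=; last by rewrite andbF.
  rewrite andbT.
  by move: hs; rewrite -E (perm_sumn (lam_perm c)) hc eqxx.
have [_ _ hst _] := hk.
have hxc : is_comp x by case/andP: hx.
have hlp : is_part l by case/andP: hl.
have [ix [c0 [p so H pc]]] := strip_exists hxc hlp hst.
have Elc0 : lam_of c0 = l := lam_part_eq hlp pc.
have hsz : size ix = i.
  have := apply_sumn H; rewrite (perm_sumn pc) hs => /eqP; rewrite eqn_add2l => /eqP.
  by [].
have hc0 : kcomp k c0.
  move: hl; rewrite /kpart /kcomp /is_part /is_comp /kbounded.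
  by rewrite !(perm_all _ pc) => /andP[/andP[-> _] ->].
have P0 : hkcomp_strip k c0 x i.
  split => //; first by exists ix.
  by rewrite Elc0.
rewrite (eq_big_seq (fun c => ((c == c0)%:R : rat))).
  by rewrite sum_eq1 ?uniq_kcomps // mem_kcomps hc0 (perm_sumn pc) hs eqxx.
move=> c hcr; congr (_%:R).
case: (pbP (hkcomp_strip k c x i)) => /= [hcs|hcs]; last first.
  by case: eqP => // E; case: hcs; rewrite E.
case: (eqVneq c c0) => [->|ne]; first by rewrite Elc0 eqxx.
case: eqP => // Elc; case/eqP: ne.
have [_ hcc [ix' [sz' p' so' H']] _] := hcs.
apply: (strip_unique hxc p' p so' so H' H).
apply: (perm_trans _ (lam_perm c0)); rewrite Elc0 -Elc perm_sym; exact: lam_perm.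
Qed.

Definition prr (P : pred (seq nat)) (F G : Elt) : rat :=
  \sum_(x <- finsupp G | P x) F x * G x.

Lemma reindex_seq (F : seq nat -> rat) (r1 r2 : seq (seq nat)) :
  uniq r1 -> uniq r2 -> (forall x, F x != 0 -> (x \in r1) = (x \in r2)) ->
  \sum_(x <- r1) F x = \sum_(x <- r2) F x.
Proof.
move=> u1 u2 H.
have h : forall r, \sum_(x <- r) F x = \sum_(x <- [seq x <- r | F x != 0]) F x.
  by move=> r; rewrite big_filter; apply/esym; apply: big_rmcond => x /negPn /eqP.
rewrite (h r1) (h r2); apply: perm_big; apply: uniq_perm; rewrite ?filter_uniq // => x.
rewrite !mem_filter; case E: (F x != 0) => //=; exact: H.
Qed.

Lemma pairE (P : pred (seq nat)) (F G : Elt) (X : seq (seq nat)) : uniq X -> {subset finsupp G <= X} ->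
  prr P F G = \sum_(x <- X | P x) F x * G x.
Proof.
move=> uX sub; rewrite /prr !(big_mkcond P).
apply: reindex_seq => //; first exact: fset_uniq.
move=> x; case: (P x) => //; rewrite mulf_eq0 negb_or => /andP[_ hG].
have hx : x \in finsupp G by rewrite mem_finsupp.
by rewrite hx (sub _ hx).
Qed.

Lemma pair_sum (P : pred (seq nat)) (F v : Elt) (I : eqType) (r : seq I) (f : I -> rat) (B : I -> Elt) :
  (forall z, P z -> v z = \sum_(m <- r) f m * B m z) ->
  prr P F v = \sum_(m <- r) f m * prr P F (B m).
Proof.
move=> Hv.
set X := undup ((finsupp v : seq _) ++ flatten [seq (finsupp (B m) : seq _) | m <- r]).
have uX : uniq X := undup_uniq _.
rewrite (pairE _ _ uX); last by move=> x hx; rewrite mem_undup mem_cat hx.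
have E : forall m, m \in r -> prr P F (B m) = \sum_(x <- X | P x) F x * B m x.
  move=> m hm; apply: pairE => // x hx; rewrite mem_undup mem_cat; apply/orP; right.
  by apply/flattenP; exists (finsupp (B m) : seq _) => //; apply/mapP; exists m.
rewrite [RHS](eq_big_seq (fun m => f m * \sum_(x <- X | P x) F x * B m x)); last first.
  by move=> m hm; rewrite E.
rewrite (eq_bigr (fun x => \sum_(m <- r) F x * (f m * B m x))); last first.
  by move=> x hx; rewrite Hv // mulr_sumr.
rewrite exchange_big /=; apply: eq_bigr => m _; rewrite mulr_sumr.
by apply: eq_bigr => x _; rewrite mulrCA.
Qed.

Lemma pair_unit (P : pred (seq nat)) (F G : Elt) a : (forall z, G z = (z == a)%:R) -> P a -> prr P F G = F a.
Proof.
move=> HG hP; rewrite (pairE _ _ (X := [:: a])) //.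
  by rewrite big_cons hP big_nil HG eqxx mulr1 addr0.
move=> x; rewrite mem_finsupp HG inE; by case: (x == a); rewrite ?eqxx.
Qed.

Lemma sum_delta (r : seq (seq nat)) (g : seq nat -> rat) x : uniq r ->
  \sum_(m <- r) g m * (x == m)%:R = (x \in r)%:R * g x.
Proof.
elim: r => [|y r IH] /=; first by rewrite big_nil mul0r.
move=> /andP[hy ur]; rewrite big_cons IH // in_cons.
case: (eqVneq x y) => [->|ne] /=.
  by rewrite (negbTE hy) mulr1 mul0r addr0 mul1r.
by rewrite mulr0 add0r.
Qed.

Lemma expand (dom : pred (seq nat)) (L : nat -> seq (seq nat)) (B E : seq nat -> Elt) (v : Elt) :
  (forall N, uniq (L N)) -> (forall N x, (x \in L N) = dom x && (sumn x <= N)%N) ->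
  is_basis dom B -> (forall b m, dom b -> dom m -> prr dom (E b) (B m) = (b == m)%:R) ->
  supp_in dom v ->
  exists N0, forall N, (N0 <= N)%N ->
    forall z, v z = \sum_(x <- L N) prr dom (E x) v * B x z.
Proof.
move=> uL mL [_ Hb] HE hv.
have [c [[hc Hv] _]] := Hb v hv.
have Pc : forall x, dom x -> prr dom (E x) v = c x.
  move=> x hx; rewrite (@pair_sum dom (E x) v _ (finsupp c) c B); last by move=> z _; exact: Hv.
  rewrite (eq_big_seq (fun m => c m * (x == m)%:R)); last first.
    by move=> m hm; rewrite HE // hc.
  rewrite sum_delta ?fset_uniq //.
  have := mem_finsupp c x; case: (x \in finsupp c) => /=; first by rewrite mul1r.
  by move=> /esym/negbFE/eqP ->; rewrite mul0r.
exists (\max_(m <- finsupp c) sumn m)%N => N hN z.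
rewrite (eq_big_seq (fun x => c x * B x z)); last first.
  by move=> x; rewrite mL => /andP[hx _]; rewrite Pc.
rewrite Hv; apply: reindex_seq => //; first exact: fset_uniq.
move=> x; rewrite mulf_eq0 negb_or => /andP[hcx _].
have hx : x \in finsupp c by rewrite mem_finsupp.
rewrite hx mL hc //=; apply/esym; apply: leq_trans hN.
by apply: (leq_bigmax_seq x hx).
Qed.

Definition ev (a : seq nat) : Elt := [fsfun x in [fset a]%fset => (x == a)%:R].
Lemma evE a z : ev a z = (z == a)%:R.
Proof. rewrite /ev fsfunE inE; case: eqP => //. Qed.

Lemma ev_supp (dom : pred (seq nat)) a : dom a -> supp_in dom (ev a).
Proof. move=> h x; rewrite mem_finsupp evE; case: (eqVneq x a) => [-> //| _]; by rewrite eqxx. Qed.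

Definition flatN (L : nat -> seq (seq nat)) N := flatten [seq L n | n <- iota 0 N.+1].

Lemma mem_flatN (dom : pred (seq nat)) L N x :
  (forall n y, (y \in L n) = dom y && (sumn y == n)%N) ->
  (x \in flatN L N) = dom x && (sumn x <= N)%N.
Proof.
move=> mL; apply/flattenP/andP.
  move=> [t /mapP [n hn ->]]; rewrite mL => /andP[-> /eqP E]; split => //.
  by move: hn; rewrite mem_iota -E; lia.
move=> [hd hs]; exists (L (sumn x)); last by rewrite mL hd eqxx.
by apply/mapP; exists (sumn x) => //; rewrite mem_iota; lia.
Qed.

Lemma uniq_flatN (dom : pred (seq nat)) L N :
  (forall n y, (y \in L n) = dom y && (sumn y == n)%N) -> (forall n, uniq (L n)) ->
  uniq (flatN L N).
Proof.
move=> mL uL; rewrite /flatN.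
elim: (iota 0 N.+1) (iota_uniq 0 N.+1) => [|n r IH] //= /andP[hn ur].
rewrite cat_uniq uL IH // andbT; apply/hasPn => y /flattenP [t /mapP [m hm ->]].
rewrite !mL => /andP[_ /eqP E1]; apply/negP => /andP[_ /eqP E].
by move: hn; rewrite -E E1 hm.
Qed.

Lemma kcomp_lam k x : kcomp k x -> kpart k (lam_of x).
Proof.
rewrite /kcomp /kpart /is_part /is_comp /kbounded !(perm_all _ (lam_perm x)).
by move=> /andP[-> ->]; rewrite lam_sorted.
Qed.

Lemma kpart_rem k i z : kpart k z -> kpart k (rem i z).
Proof.
rewrite /kpart /is_part /is_comp /kbounded => /andP[/andP[h1 h2] h3].
have sub := mem_subseq (rem_subseq i z).
rewrite (subseq_sorted geq_tr (rem_subseq i z) h2) andbT.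
apply/andP; split; apply/allP => y /sub hy; [exact: (allP h1) | exact: (allP h3)].
Qed.

Lemma lam_cons i a z : is_part z ->
  (z == lam_of (i :: a)) = (i \in z) && (rem i z == lam_of a).
Proof.
move=> /andP[_ hz].
have hr : sorted geq (rem i z) := subseq_sorted geq_tr (rem_subseq i z) hz.
apply/eqP/andP.
  move=> E; have hi : i \in z by rewrite E (perm_mem (lam_perm _)) mem_head.
  split => //; apply/eqP; apply: (sorted_eq geq_tr geq_anti) => //; first exact: lam_sorted.
  have p1 := perm_to_rem hi.
  have p2 : perm_eq (i :: rem i z) (i :: a).
    by rewrite perm_sym (perm_trans _ p1) // E perm_sym lam_perm.
  by rewrite perm_cons in p2; rewrite (perm_trans p2) // perm_sym lam_perm.
move=> [hi /eqP hrem]; apply: (sorted_eq geq_tr geq_anti) => //; first exact: lam_sorted.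
apply: (perm_trans (perm_to_rem hi)); rewrite hrem.
apply: (@perm_trans _ (i :: a)); first by rewrite perm_cons lam_perm.
by rewrite perm_sym lam_perm.
Qed.

Definition KC k N := flatN (kcomps k) N.
Definition KP k N := flatN (kparts k) N.

Lemma mem_KC k N x : (x \in KC k N) = kcomp k x && (sumn x <= N)%N.
Proof. apply: mem_flatN => n y; exact: mem_kcomps. Qed.
Lemma mem_KP k N x : (x \in KP k N) = kpart k x && (sumn x <= N)%N.
Proof. apply: mem_flatN => n y; exact: mem_kparts. Qed.
Lemma uniq_KC k N : uniq (KC k N).
Proof. apply: (@uniq_flatN (kcomp k)) => n; [exact: mem_kcomps | exact: uniq_kcomps]. Qed.
Lemma uniq_KP k N : uniq (KP k N).
Proof. apply: (@uniq_flatN (kpart k)) => n; [exact: mem_kparts | exact: uniq_kparts]. Qed.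

Lemma regroup k N (G : seq nat -> seq nat -> rat) :
  \sum_(mu <- KP k N) \sum_(x <- kcomps k (sumn mu) | lam_of x == mu) G x mu
  = \sum_(x <- KC k N) G x (lam_of x).
Proof.
symmetry.
rewrite (eq_big_seq (fun x => \sum_(mu <- KP k N) G x mu * (lam_of x == mu)%:R)); last first.
  move=> x; rewrite mem_KC => /andP[hx hxN].
  by rewrite sum_delta ?uniq_KP // mem_KP kcomp_lam // (perm_sumn (lam_perm x)) hxN mul1r.
rewrite exchange_big /=; apply: eq_big_seq => mu; rewrite mem_KP => /andP[hmu hmuN].
rewrite [RHS]big_mkcond /=.
rewrite [RHS](eq_bigr (fun x => G x mu * (lam_of x == mu)%:R)); last first.
  by move=> x _; case: eqP => _; rewrite ?mulr1 ?mulr0.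
apply: reindex_seq; rewrite ?uniq_KC ?uniq_kcomps // => x.
case: (eqVneq (lam_of x) mu) => [E|ne]; last by rewrite mulr0 eqxx.
move=> _; rewrite mem_KC mem_kcomps -E (perm_sumn (lam_perm x)) eqxx andbT.
by move: hmuN; rewrite -E (perm_sumn (lam_perm x)) => ->; rewrite andbT.
Qed.

Lemma claim k (s D S Q : seq nat -> Elt) :
  is_kSchur k s -> is_dual_kSchur k s D -> is_ncSchur k S -> is_qaSchur k S Q ->
  forall a, kcomp k a -> forall l, kpart k l ->
  D l (lam_of a) = \sum_(b <- kcomps k (sumn l) | lam_of b == l) Q b a.
Proof.
move=> [bs ones Ps] [_ pD] [bS oneS PS] [_ pQ].
have pD' : forall b m, kpart k b -> kpart k m -> prr (kpart k) (D b) (s m) = (b == m)%:R := pD.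
have pQ' : forall b m, kcomp k b -> kcomp k m -> prr (kcomp k) (Q b) (S m) = (b == m)%:R := pQ.
have QE : forall b a, kcomp k a -> Q b a = prr (kcomp k) (Q b) (ev a).
  by move=> b a ha; rewrite (@pair_unit (kcomp k) (Q b) (ev a) a) // => z; rewrite evE.
have DE : forall l v, kpart k v -> D l v = prr (kpart k) (D l) (ev v).
  by move=> l v hv; rewrite (@pair_unit (kpart k) (D l) (ev v) v) // => z; rewrite evE.
have expS : forall a, kcomp k a -> exists N0, forall N, (N0 <= N)%N ->
    forall z, ev a z = \sum_(x <- KC k N) Q x a * S x z.
  move=> a ha.
  have [N0 H] := @expand (kcomp k) (KC k) S Q (ev a) (@uniq_KC k) (@mem_KC k) bS pQ' (ev_supp ha).
  exists N0 => N hN z; rewrite (H N hN z); apply: eq_big_seq => x.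
  by rewrite mem_KC => /andP[hx _]; rewrite -QE.
have expD : forall v, kpart k v -> exists N0, forall N, (N0 <= N)%N ->
    forall z, ev v z = \sum_(x <- KP k N) D x v * s x z.
  move=> v hv.
  have [N0 H] := @expand (kpart k) (KP k) s D (ev v) (@uniq_KP k) (@mem_KP k) bs pD' (ev_supp hv).
  exists N0 => N hN z; rewrite (H N hN z); apply: eq_big_seq => x.
  by rewrite mem_KP => /andP[hx _]; rewrite -DE.
elim=> [|i a IH] ha l hl.
  rewrite (_ : lam_of [::] = [::]) //.
  rewrite -(@pair_unit (kpart k) (D l) (s [::]) [::] ones isT) pD' //.
  rewrite big_mkcond /=.
  rewrite (eq_big_seq (fun b => (lam_of b == l)%:R * ([::] == b)%:R)); last first.
    move=> b; rewrite mem_kcomps => /andP[hb _].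
    rewrite -(@pair_unit (kcomp k) (Q b) (S [::]) [::] oneS isT) pQ' //.
    by case: (eqVneq (lam_of b) l) => _; rewrite ?mul1r ?mul0r // eq_sym.
  rewrite sum_delta ?uniq_kcomps // mem_kcomps /=.
  case: l hl => [|y l] hl /=; first by rewrite mulr1.
  by rewrite mulr0.
have [hi hik ha'] : [/\ (0 < i)%N, (i <= k)%N & kcomp k a].
  move: ha; rewrite /kcomp /is_comp /kbounded /= => /andP[/andP[h1 h2] /andP[h3 h4]].
  by rewrite h2 h4.
have hik2 : (0 < i <= k)%N by rewrite hi hik.
have [N1 HS] := expS a ha'.
have [N2 HD] := expD (lam_of a) (kcomp_lam ha').
set N := maxn N1 N2.
have HS' := HS N (leq_maxl _ _).
have HD' := HD N (leq_maxr _ _).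
have Qa : forall b, kcomp k b -> Q b (i :: a) = \sum_(x <- KC k N) Q x a *
    \sum_(c <- kcomps k (sumn x + i) | pb (hkcomp_strip k c x i)) (b == c)%:R.
  move=> b hb; rewrite QE //.
  rewrite (@pair_sum (kcomp k) (Q b) (ev (i :: a)) _
     [seq (x, c) | x <- KC k N, c <- [seq c <- kcomps k (sumn x + i) | pb (hkcomp_strip k c x i)]]
     (fun p => Q p.1 a) (fun p => S p.2)).
    rewrite big_allpairs_dep /=; apply: eq_bigr => x _; rewrite big_filter mulr_sumr.
    rewrite [LHS]big_seq_cond [RHS]big_seq_cond; apply: eq_bigr => c /andP[].
    by rewrite mem_kcomps => /andP[hc _] _; rewrite pQ'.
  move=> z hz; rewrite big_allpairs_dep /= evE.
  rewrite (eq_big_seq (fun x => Q x a * mulH i (S x) z)); last first.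
    by move=> x; rewrite mem_KC => /andP[hx _]; rewrite big_filter PS // mulr_sumr.
  case: z hz => [|j z] hz /=.
    by rewrite big1 // => x _; rewrite mulr0.
  rewrite eqseq_cons; case: (eqVneq j i) => [E|ne] /=; first by rewrite -evE HS'.
  by rewrite big1 // => x _; rewrite mulr0.
have HL : \sum_(b <- kcomps k (sumn l) | lam_of b == l) Q b (i :: a) =
    \sum_(x <- KC k N) Q x a * (pb (hkstrip k (lam_of x) l) && (sumn l == sumn x + i)%N)%:R.
  rewrite [LHS]big_seq_cond.
  rewrite (eq_bigr (fun b => \sum_(x <- KC k N) Q x a *
    \sum_(c <- kcomps k (sumn x + i) | pb (hkcomp_strip k c x i)) (b == c)%:R)); last first.
    by move=> b /andP[]; rewrite mem_kcomps => /andP[hb _] _; rewrite Qa.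
  rewrite -big_seq_cond exchange_big /=; apply: eq_big_seq => x; rewrite mem_KC => /andP[hx _].
  rewrite -mulr_sumr; congr (_ * _).
  rewrite exchange_big /= -(strip_count _ hx hl).
  rewrite [LHS]big_seq_cond [RHS]big_seq_cond; apply: eq_bigr => c /andP[hc _].
  rewrite big_mkcond /= (eq_bigr (fun b => (lam_of b == l)%:R * (c == b)%:R)); last first.
    by move=> b _; case: (eqVneq (lam_of b) l) => _; rewrite ?mul1r ?mul0r // eq_sym.
  rewrite sum_delta ?uniq_kcomps // mem_kcomps.
  move: hc; rewrite mem_kcomps => /andP[hc _]; rewrite hc /=.
  case: (eqVneq (lam_of c) l) => [E|_]; last by rewrite mulr0.
  by rewrite -E (perm_sumn (lam_perm c)) eqxx mulr1.
rewrite HL DE ?kcomp_lam //.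
rewrite (@pair_sum (kpart k) (D l) (ev (lam_of (i :: a))) _
   [seq (mu, nu) | mu <- KP k N, nu <- [seq nu <- kparts k (sumn mu + i) | pb (hkstrip k mu nu)]]
   (fun p => D p.1 (lam_of a)) (fun p => s p.2)); last first.
  move=> z hz; rewrite big_allpairs_dep /= evE lam_cons; last by case/andP: hz.
  rewrite (eq_big_seq (fun mu => D mu (lam_of a) * mulh i (s mu) z)); last first.
    by move=> mu; rewrite mem_KP => /andP[hmu _]; rewrite big_filter Ps // mulr_sumr.
  rewrite /mulh; case: (i \in z) => /=; first by rewrite -evE HD'.
  by rewrite big1 // => mu _; rewrite mulr0.
rewrite big_allpairs_dep /=.
rewrite (eq_big_seq (fun mu => (\sum_(x <- kcomps k (sumn mu) | lam_of x == mu) Q x a) *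
   ((l \in kparts k (sumn mu + i))%:R * (pb (hkstrip k mu l))%:R))); last first.
  move=> mu; rewrite mem_KP => /andP[hmu _].
  rewrite big_filter -mulr_sumr (IH ha' mu hmu); congr (_ * _).
  rewrite [LHS]big_seq_cond (eq_bigr (fun nu => (l == nu)%:R)); last first.
    by move=> nu /andP[]; rewrite mem_kparts => /andP[hnu _] _; rewrite pD'.
  rewrite -big_seq_cond big_mkcond /=.
  rewrite (eq_bigr (fun nu => (pb (hkstrip k mu nu))%:R * (l == nu)%:R)); last first.
    by move=> nu _; case: (pb _); rewrite ?mul1r ?mul0r.
  by rewrite sum_delta ?uniq_kparts.
rewrite (eq_bigr (fun mu => \sum_(x <- kcomps k (sumn mu) | lam_of x == mu)
   Q x a * ((l \in kparts k (sumn mu + i))%:R * (pb (hkstrip k mu l))%:R))); last first.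
  by move=> mu _; rewrite mulr_suml.
rewrite (regroup k N (fun x mu => Q x a * ((l \in kparts k (sumn mu + i))%:R * (pb (hkstrip k mu l))%:R))).
apply: eq_big_seq => x; rewrite mem_KC => /andP[hx _].
congr (_ * _).
by rewrite mem_kparts hl /= (perm_sumn (lam_perm x)) -natrM mulnb andbC.
Qed.


Theorem mainTheorem8 (k : nat) (hk : (1 <= k)%N)
  (s D S Q : seq nat -> Elt) :
  is_kSchur k s -> is_dual_kSchur k s D ->
  is_ncSchur k S -> is_qaSchur k S Q ->
  forall l : seq nat, kpart k l ->
    qeq k (toQSym (D l))
          (fun a => \sum_(b <- kcomps k (sumn l) | lam_of b == l) Q b a).
Proof.
move=> hs hD hS hQ l hl a ha; rewrite /toQSym.
have -> : is_comp a by case/andP: ha.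
exact: (claim hs hD hS hQ ha hl).
Qed.
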